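(* Let $\mathbf v\in\mathbb R^{n\times m}_{<0}$, $\mathbf b\in\mathbb R^n_{<0}$, $\mathbf u\in\mathbb R^n_{<0}$, and $\tau=\tau(\mathbf u,\mathbf b)=(b_i/u_i)_{i\in[n]}$. Then $\mathbf u$ is a competitive utility profile for $(\mathbf v,\mathbf b)$ if and only if there exists an allocation $\mathbf z$ with $\mathbf u(\mathbf z)=\mathbf u$ and $G_{\mathbf z}$ a subgraph of $G_\tau(\mathbf v)$. Moreover, the set of all such $\mathbf z$ coincides with the set of competitive allocations $\mathbf z$ for $(\mathbf v,\mathbf b)$ with $\mathbf u(\mathbf z)=\mathbf u$.
   Context: Setup: agents $[n]$, chores $[m]$, allocations $\mathbf z\in\mathbb R^{n\times m}_{\ge0}$ with column sums $1$, $u_i(\mathbf z_i)=\sum_jv_{i,j}z_{i,j}$. Competitive allocation for budgets $\mathbf b$: there exist prices $\mathbf p\in\mathbb R^m_{<0}$ such that each $\mathbf z_i$ maximizes $u_i$ over bundles $\mathbf x\in\mathbb R^m_{\ge0}$ with $\sum_jp_jx_j\le b_i$; a competitive utility profile is $\mathbf u(\mathbf z)$ for such $\mathbf z$. $G_{\mathbf z}$: edge $(i,j)$ iff $z_{i,j}>0$. For $\tau\in\mathbb R^n_{>0}$, $G_\tau(\mathbf v)$: edge $(i,j)$ iff $\tau_i|v_{i,j}|\le\tau_{i'}|v_{i',j}|$ for all $i'$. *)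

(* Defs.v *)
(* reals are modelled by an arbitrary real field R
   (the statement is purely order-theoretic/algebraic). *)
From HB Require Import structures.
From mathcomp Require Import all_boot all_order all_algebra.
Set Implicit Arguments. Unset Strict Implicit. Unset Printing Implicit Defensive.
Import Order.TTheory GRing.Theory Num.Theory.
Local Open Scope ring_scope.

Section Defs.
Variables (R : realFieldType) (n m : nat).

Definition util (v : 'I_n -> 'I_m -> R) (i : 'I_n) (x : 'I_m -> R) : R :=
  \sum_(j < m) v i j * x j.

Definition util_profile (v : 'I_n -> 'I_m -> R) (z : 'I_n -> 'I_m -> R)
  : 'I_n -> R := fun i => util v i (z i).

Definition allocation (z : 'I_n -> 'I_m -> R) : Prop :=
  (forall i j, 0 <= z i j) /\ (forall j, \sum_(i < n) z i j = 1).

Definition cost (p : 'I_m -> R) (x : 'I_m -> R) : R := \sum_(j < m) p j * x j.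

Definition competitive (v : 'I_n -> 'I_m -> R) (b : 'I_n -> R)
  (z : 'I_n -> 'I_m -> R) : Prop :=
  allocation z /\
  exists p : 'I_m -> R, (forall j, p j < 0) /\
    forall i, cost p (z i) <= b i /\
      forall x : 'I_m -> R, (forall j, 0 <= x j) -> cost p x <= b i ->
        util v i x <= util v i (z i).

Definition competitive_profile (v : 'I_n -> 'I_m -> R) (b : 'I_n -> R)
  (u : 'I_n -> R) : Prop :=
  exists z, competitive v b z /\ util_profile v z = u.

Definition Gtau_edge (tau : 'I_n -> R) (v : 'I_n -> 'I_m -> R)
  (i : 'I_n) (j : 'I_m) : bool :=
  [forall i' : 'I_n, tau i * `|v i j| <= tau i' * `|v i' j|].

Definition subgraph_Gtau (z : 'I_n -> 'I_m -> R) (tau : 'I_n -> R)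
  (v : 'I_n -> 'I_m -> R) : Prop :=
  forall i j, 0 < z i j -> Gtau_edge tau v i j.

End Defs.

(* Main.v *)
Require Import Defs.
From HB Require Import structures.
From mathcomp Require Import all_boot all_order all_algebra.
From mathcomp Require Import ring lra.
Import Order.TTheory GRing.Theory Num.Theory.
Local Open Scope ring_scope.

Lemma t1_aux {R : realFieldType} {t v p c u b : R} : p < 0 -> u < 0 ->
  c * p = b -> t * u = b -> v * c <= u -> t * v <= p.
Proof. move=> hp hu hc ht hv.
have e : (t * v - p) * u = p * (v * c - u).
  have -> : (t * v - p) * u = (t * u) * v - p * u by ring.
  rewrite ht -hc; ring.
have h1 : 0 <= p * (v * c - u) by nra.
nra. Qed.

Section Proof.
Variables (R : realFieldType) (n m : nat)
  (v : 'I_n -> 'I_m -> R) (b u : 'I_n -> R)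
  (hv : forall i j, v i j < 0) (hb : forall i, b i < 0) (hu : forall i, u i < 0).

Let tau := fun i => b i / u i.

Lemma tau_pos i : 0 < tau i.
Proof. rewrite /tau -mulrNN -invrN; apply: divr_gt0; rewrite oppr_gt0 //. Qed.

Lemma tau_u i : tau i * u i = b i.
Proof. rewrite /tau divfK //; exact: ltr0_neq0. Qed.

Lemma edgeE i j : Gtau_edge tau v i j <-> forall i', tau i' * v i' j <= tau i * v i j.
Proof.
rewrite /Gtau_edge; split.
- move/forallP => h i'; have := h i'.
  rewrite !ltr0_norm // !mulrN lerN2 //.
- move=> h; apply/forallP => i'; rewrite !ltr0_norm // !mulrN lerN2; exact: h.
Qed.

Lemma utilE {z i} (hz: util_profile v z = u) : util v i (z i) = u i.
Proof. by have := congr1 (fun f => f i) hz. Qed.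

Lemma dir1 z : competitive v b z -> util_profile v z = u -> subgraph_Gtau z tau v.
Proof.
move=> [[hz0 hz1] [p [hp hopt]]] hz.
have key : forall i k, tau i * v i k <= p k.
  move=> i k.
  pose c := b i / p k.
  pose x := fun l : 'I_m => if l == k then c else 0.
  have hc : c * p k = b i by rewrite /c divfK //; exact: ltr0_neq0.
  have cpos : 0 <= c by rewrite /c -mulrNN -invrN; apply/ltW/divr_gt0;
    rewrite oppr_gt0.
  have hx0 : forall l, 0 <= x l by move=> l; rewrite /x; case: eqP.
  have sx : forall F : 'I_m -> R, \sum_(l < m) F l * x l = F k * c.
    move=> F; rewrite (bigD1 k) //= big1 ?addr0 /x ?eqxx //.
    by move=> l /negbTE ->; rewrite mulr0.
  have hcost : cost p x <= b i by rewrite /cost sx mulrC hc.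
  have := (hopt i).2 x hx0 hcost.
  rewrite {1}/util sx (utilE (i:=i) hz) => hle.
  exact: (t1_aux (hp k) (hu i) hc (tau_u i) hle).
move=> i j hij.
have hsum : \sum_(k < m) (p k - tau i * v i k) * z i k
            = cost p (z i) - tau i * util v i (z i).
  rewrite /cost /util mulr_sumr -sumrB; apply: eq_bigr => k _; ring.
have hge : forall k, 0 <= (p k - tau i * v i k) * z i k.
  move=> k; apply: mulr_ge0 => //; rewrite subr_ge0; exact: key.
have hle : \sum_(k < m) (p k - tau i * v i k) * z i k <= 0.
  rewrite hsum (utilE (i:=i) hz) tau_u subr_le0; exact: (hopt i).1.
have h0 : \sum_(k < m) (p k - tau i * v i k) * z i k = 0.
  by apply/eqP; rewrite eq_le hle sumr_ge0.
have := psumr_eq0P (fun k _ => hge k) h0 (i:=j) isT.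
move=> /eqP; rewrite mulf_eq0 (gt_eqF hij) orbF subr_eq0 => /eqP hpj.
apply/edgeE => i'; rewrite -hpj; exact: key.
Qed.

Lemma dir2 z : allocation z -> util_profile v z = u -> subgraph_Gtau z tau v ->
  competitive v b z.
Proof.
move=> [hz0 hz1] hz hsub.
have ex : forall j, exists i, 0 < z i j.
  move=> j; case: (pickP (fun i => 0 < z i j)) => [k hk|hn]; first by exists k.
  exfalso; have := hz1 j; rewrite big1 => [/eqP|k _]; first by rewrite eq_sym oner_eq0.
  by have := hz0 k j; rewrite le_eqVlt hn orbF => /eqP <-.
pose p := fun j => match [pick i | 0 < z i j] with
                   | Some k => tau k * v k j | None => -1 end.
have hp1 : forall i j, tau i * v i j <= p j.
  move=> i j; rewrite /p; case: pickP => [k hk|hn].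
    by have /edgeE := hsub k j hk; apply.
  by have [k hk] := ex j; rewrite hn in hk.
have hp2 : forall i j, 0 < z i j -> p j = tau i * v i j.
  move=> i j hij; apply/eqP; rewrite eq_le hp1 andbT /p; case: pickP => [k hk|hn].
    by have /edgeE := hsub i j hij; apply.
  by rewrite hn in hij.
split; first by [].
exists p; split.
  move=> j; have [k hk] := ex j; rewrite (hp2 _ _ hk).
  have := tau_pos k; have := hv k j; nra.
have hcost : forall i, cost p (z i) = b i.
  move=> i; rewrite -tau_u -(utilE (i:=i) hz) /cost /util mulr_sumr.
  apply: eq_bigr => k _; have := hz0 i k; rewrite le_eqVlt => /orP [/eqP <-|hk].
    by rewrite !mulr0.
  by rewrite (hp2 _ _ hk) mulrA.
move=> i; split; first by rewrite hcost.
move=> x hx hcx; rewrite (utilE (i:=i) hz).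
have : tau i * util v i x <= tau i * u i.
  rewrite tau_u; apply: le_trans hcx; rewrite /util /cost mulr_sumr.
  apply: ler_sum => k _; rewrite mulrA; apply: ler_wpM2r => //; exact: hp1.
by rewrite ler_pM2l // tau_pos.
Qed.

End Proof.

Theorem corollary5 (R : realFieldType) (n m : nat)
  (v : 'I_n -> 'I_m -> R) (b u : 'I_n -> R)
  (hv : forall i j, v i j < 0) (hb : forall i, b i < 0) (hu : forall i, u i < 0) :
  let tau := fun i => b i / u i in
  (competitive_profile v b u <->
     exists z, allocation z /\ util_profile v z = u /\ subgraph_Gtau z tau v) /\
  (forall z : 'I_n -> 'I_m -> R,
     (allocation z /\ util_profile v z = u /\ subgraph_Gtau z tau v) <->
     (competitive v b z /\ util_profile v z = u)).
Proof.
move=> tau.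
have H2 : forall z : 'I_n -> 'I_m -> R,
     (allocation z /\ util_profile v z = u /\ subgraph_Gtau z tau v) <->
     (competitive v b z /\ util_profile v z = u).
  move=> z; split.
    by move=> [ha [hz hs]]; split => //; eapply dir2; eassumption.
  move=> [hc hz]; split; first by case: hc.
  by split => //; eapply dir1; eassumption.
split => //; split.
  by move=> [z hz]; exists z; apply/H2.
by move=> [z hz]; exists z; apply/H2.
Qed.
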